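(* Let $n,m\ge1$, $r>0$, and let $\mathbf b_1,\dots,\mathbf b_m\in[0,\infty)^n$ be nonzero vectors with nonnegative entries. Put $D_{ij}=\frac{r}{m}(\mathbf b_i\cdot\mathbf b_j)$ for $i,j=1,\dots,m$. Then the system of equations $$\sum_{j=1}^m D_{kj}\alpha_k\alpha_j=1,\qquad k=1,\dots,m,$$ has at most one solution $(\alpha_1,\dots,\alpha_m)$ with all $\alpha_k>0$. *)

(* Defs.v *)
From mathcomp Require Import all_boot all_order all_algebra.
From mathcomp Require Import reals.
Set Implicit Arguments. Unset Strict Implicit. Unset Printing Implicit Defensive.
Import Order.TTheory GRing.Theory Num.Theory.
Local Open Scope ring_scope.

Definition dotp (R : realType) (n : nat) (u v : 'I_n -> R) : R :=
  \sum_(l < n) u l * v l.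

Definition Dmat (R : realType) (n m : nat) (r : R) (b : 'I_m -> 'I_n -> R)
  (i j : 'I_m) : R := r / m%:R * dotp (b i) (b j).

Definition solves (R : realType) (n m : nat) (r : R) (b : 'I_m -> 'I_n -> R)
  (alpha : 'I_m -> R) : Prop :=
  forall k : 'I_m, \sum_(j < m) Dmat r b k j * alpha k * alpha j = 1.

(* Main.v *)
Require Import Defs.
From mathcomp Require Import all_boot all_order all_algebra.
From mathcomp Require Import reals.
From mathcomp Require Import ring.
From Stdlib Require Import FunctionalExtensionality.
Import Order.TTheory GRing.Theory Num.Theory.
Local Open Scope ring_scope.

Theorem theorem2 (R : realType) (n m : nat) (r : R) (b : 'I_m -> 'I_n -> R)
  (hn : (1 <= n)%N) (hm : (1 <= m)%N) (hr : 0 < r)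
  (hb_nonneg : forall i l, 0 <= b i l)
  (hb_nonzero : forall i, exists l, b i l != 0)
  (alpha beta : 'I_m -> R)
  (halpha_pos : forall k, 0 < alpha k) (hbeta_pos : forall k, 0 < beta k)
  (halpha : solves r b alpha) (hbeta : solves r b beta) :
  alpha = beta.
Proof.
have DS : forall g : 'I_m -> R, (forall k, 0 < g k) -> solves r b g ->
    forall k, \sum_(j < m) Dmat r b k j * g j = (g k)^-1.
  move=> g gpos hg k; have := hg k.
  rewrite (eq_bigr (fun j => g k * (Dmat r b k j * g j))); last first.
    by move=> j _; ring.
  rewrite -mulr_sumr => h.
  have gk0 : g k != 0 by rewrite gt_eqF.
  apply: (mulfI gk0); by rewrite h divff.
set d := fun k => alpha k - beta k.
set c := r / m%:R.
set Q := \sum_(k < m) d k * \sum_(j < m) Dmat r b k j * d j.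
have E1 : Q = \sum_(k < m) d k * ((alpha k)^-1 - (beta k)^-1).
  apply: eq_bigr => k _; congr (_ * _).
  rewrite -(DS _ halpha_pos halpha) -(DS _ hbeta_pos hbeta) -sumrB.
  by apply: eq_bigr => j _; rewrite /d mulrBr.
have E2 : Q = \sum_(l < n) c * ((\sum_(k < m) d k * b k l) * (\sum_(j < m) d j * b j l)).
  rewrite /Q.
  transitivity (\sum_(k < m) \sum_(j < m) \sum_(l < n) c * (d k * b k l) * (d j * b j l)).
    apply: eq_bigr => k _; rewrite mulr_sumr; apply: eq_bigr => j _.
    rewrite /Dmat /dotp -/c mulr_sumr mulr_suml mulr_sumr; apply: eq_bigr => l _; ring.
  under eq_bigr do rewrite exchange_big.
  rewrite exchange_big; apply: eq_bigr => l _.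
  rewrite mulr_suml mulr_sumr; apply: eq_bigr => k _.
  rewrite mulr_sumr mulr_sumr; apply: eq_bigr => j _; ring.
have Qge0 : 0 <= Q.
  rewrite E2; apply: sumr_ge0 => l _; apply: mulr_ge0.
    by rewrite /c divr_ge0 // ltW.
  by rewrite -expr2 sqr_ge0.
set u := fun k => (d k) ^+ 2 / (alpha k * beta k).
have hu : forall k, d k * ((alpha k)^-1 - (beta k)^-1) = - u k.
  move=> k; rewrite /u /d.
  have a0 : alpha k != 0 by rewrite gt_eqF.
  have b0 : beta k != 0 by rewrite gt_eqF.
  by field; rewrite a0 b0.
have uge0 : forall k, 0 <= u k.
  move=> k; rewrite /u divr_ge0 ?sqr_ge0 // mulr_ge0 // ltW //.
have su : \sum_(k < m) u k = 0.
  apply/eqP; rewrite eq_le; apply/andP; split; last by apply: sumr_ge0 => k _; apply: uge0.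
  rewrite -oppr_ge0 -sumrN.
  by rewrite (eq_bigr (fun k => d k * ((alpha k)^-1 - (beta k)^-1))) -?E1 // => k _; rewrite hu.
have := psumr_eq0P (fun k _ => uge0 k) su => H.
apply: functional_extensionality => k.
have := H k isT; rewrite /u.
have ab0 : alpha k * beta k != 0 by rewrite mulf_neq0 // gt_eqF.
move/eqP; rewrite mulf_eq0 invr_eq0 (negbTE ab0) orbF sqrf_eq0 /d subr_eq0.
by move/eqP.
Qed.
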